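(* Let $\gamma\in PSL(n+1,\mathbb{C})$ be a projective transformation of $\mathbb{P}^n_{\mathbb{C}}$. Then: (1) $\gamma$ is loxodromic if and only if there are two distinct points $x,y\in \mathrm{Fix}(\gamma)$ such that the action of $\gamma$ restricted to the complex projective line $\langle\langle x,y\rangle\rangle$ is loxodromic. (2) $\gamma$ is parabolic if and only if every lift $\widetilde\gamma\in SL(n+1,\mathbb{C})$ of $\gamma$ is non-diagonalizable and for every couple of distinct points $x,y\in \mathrm{Fix}(\gamma)$ the action of $\gamma$ restricted to the complex projective line $\langle\langle x,y\rangle\rangle$ is elliptic. (3) $\gamma$ is elliptic if and only if every lift $\widetilde\gamma\in SL(n+1,\mathbb{C})$ of $\gamma$ is diagonalizable and for every couple of distinct points $x,y\in \mathrm{Fix}(\gamma)$ the action of $\gamma$ restricted to the complex projective line $\langle\langle x,y\rangle\rangle$ is elliptic.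
   Context: $PSL(n+1,\mathbb{C})$ acts on $\mathbb{P}^n_{\mathbb{C}}=(\mathbb{C}^{n+1}\setminus\{0\})/\mathbb{C}^*$; a lift of $\gamma$ is a matrix $\widetilde\gamma\in SL(n+1,\mathbb{C})$ projecting to $\gamma$. $\mathrm{Fix}(\gamma)$ denotes the set of fixed points of $\gamma$ in $\mathbb{P}^n_{\mathbb{C}}$, and for a set of points $P$, $\langle\langle P\rangle\rangle$ is the smallest projective subspace containing $P$ (so for distinct $x,y$ it is the projective line through them). The classification used: $\gamma$ is elliptic if every lift $\widetilde\gamma$ is diagonalizable with all eigenvalues of modulus one; $\gamma$ is loxodromic if every lift $\widetilde\gamma$ has an eigenvalue of modulus different from one; $\gamma$ is parabolic if every lift $\widetilde\gamma$ has only eigenvalues of modulus one and is non-diagonalizable. The same classification applies to the restriction of $\gamma$ to an invariant projective line (an element of $PSL(2,\mathbb{C})$). *)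

(* Defs.v *)
From HB Require Import structures.
From mathcomp Require Import all_boot all_order all_algebra.
From mathcomp Require Import complex.
From mathcomp Require Import reals.
Set Implicit Arguments. Unset Strict Implicit. Unset Printing Implicit Defensive.
Import Order.TTheory GRing.Theory Num.Theory.
Local Open Scope ring_scope.

(* A projective transformation of P^(k-1) is represented by an invertible
   matrix g : 'M[R[i]]_k acting on column vectors (x |-> g *m x). *)

Section Classification.
Variable R : realType.
Local Notation C := R[i].

(* h is a lift in SL(k,C) of the projective class of g *)
Definition is_lift (k : nat) (g h : 'M[C]_k) : Prop :=
  \det h = 1 /\ exists c : C, c != 0 /\ h = c *: g.

Definition elliptic (k : nat) (g : 'M[C]_k) : Prop :=
  forall h, is_lift g h ->
    diagonalizable h /\ (forall a : C, eigenvalue h a -> `|a| = 1).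

Definition loxodromic (k : nat) (g : 'M[C]_k) : Prop :=
  forall h, is_lift g h -> exists a : C, eigenvalue h a /\ `|a| != 1.

Definition parabolic (k : nat) (g : 'M[C]_k) : Prop :=
  forall h, is_lift g h ->
    (forall a : C, eigenvalue h a -> `|a| = 1) /\ ~ diagonalizable h.

(* x (a nonzero column vector) represents a fixed point of g in P^(k-1) *)
Definition fixed_point (k : nat) (g : 'M[C]_k) (x : 'cV[C]_k) : Prop :=
  x != 0 /\ exists a : C, g *m x = a *: x.

Definition distinct_points (k : nat) (x y : 'cV[C]_k) : Prop :=
  ~ (exists c : C, c != 0 /\ y = c *: x).

(* M : 'M_2 is a matrix of the restriction of g to the projective line
   <<x,y>>, written in a basis (columns of B) of the 2-dimensional
   subspace spanned by x and y. *)
Definition restriction_on_line (k : nat) (g : 'M[C]_k) (x y : 'cV[C]_k)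
    (M : 'M[C]_2) : Prop :=
  exists P : 'M[C]_2, P \in unitmx /\
    let B : 'M[C]_(k, 2) := row_mx x y *m P in g *m B = B *m M.

Definition restr_loxodromic (k : nat) (g : 'M[C]_k) (x y : 'cV[C]_k) : Prop :=
  exists M : 'M[C]_2, restriction_on_line g x y M /\ loxodromic M.

Definition restr_elliptic (k : nat) (g : 'M[C]_k) (x y : 'cV[C]_k) : Prop :=
  exists M : 'M[C]_2, restriction_on_line g x y M /\ elliptic M.

End Classification.

(* Main.v *)
Require Import Defs.
From HB Require Import structures.
From mathcomp Require Import all_boot all_order all_algebra.
From mathcomp Require Import complex.
From mathcomp Require Import reals.
Import Order.TTheory GRing.Theory Num.Theory.
Local Open Scope ring_scope.
From Stdlib Require Import Classical.

Lemma det_abs (C : numClosedFieldType) k (A : 'M[C]_k) (r : C) :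
  (forall a, eigenvalue A a -> `|a| = r) -> `|\det A| = r ^+ k.
Proof.
move=> hr.
have [s hs] := closed_field_poly_normal (char_poly A).
rewrite (monicP (char_poly_monic A)) scale1r in hs.
have sz : size s = k by move: (size_char_poly A); rewrite hs size_prod_XsubC; case.
have := char_poly_det A; rewrite hs coef0_prod_XsubC sz => e.
have : `|(-1)^+k * \prod_(p <- s) p| = `|(-1)^+k * \det A| by rewrite e.
rewrite !normrM normrX normrN1 expr1n !mul1r => <-.
rewrite normr_prod big_seq (eq_bigr (fun=> r)); last first.
  move=> i his; apply: hr; rewrite eigenvalue_root_char hs root_prod_XsubC //.
by rewrite -big_seq big_const_seq count_predT sz -Monoid.iteropE.
Qed.

Lemma eigC (F : fieldType) k (A : 'M[F]_k) a :
  eigenvalue A a <-> exists x : 'cV_k, x != 0 /\ A *m x = a *: x.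
Proof.
have -> : eigenvalue A a = eigenvalue A^T a.
  by rewrite /eigenvalue /eigenspace !kermx_eq0 !row_free_unit
       -unitmx_tr linearB /= tr_scalar_mx.
split.
  move=> /eigenvalueP [v hv v0]; exists v^T; split; first by rewrite trmx_eq0.
  by rewrite -[A]trmxK -trmx_mul hv linearZ.
move=> [x [x0 hx]]; apply/eigenvalueP; exists x^T; last by rewrite trmx_eq0.
by rewrite -trmx_mul hx linearZ.
Qed.

Lemma eig_scale {F : fieldType} {k} {A : 'M[F]_k} {c a} :
  c != 0 -> eigenvalue (c *: A) a <-> eigenvalue A (c^-1 * a).
Proof.
move=> c0; rewrite !eigC; split=> -[x [x0 hx]]; exists x; split=> //.
  by rewrite -scalerA -hx -scalemxAl scalerA mulVf // scale1r.
by rewrite -scalemxAl hx scalerA mulrA divff // mul1r.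
Qed.

Lemma nz_entry {F : fieldType} {m k} {x : 'M[F]_(m,k)} :
  x != 0 -> exists i j, x i j != 0.
Proof.
move=> x0; case: (pickP (fun p : 'I_m * 'I_k => x p.1 p.2 != 0)) => [[i j] h|h].
  by exists i, j.
move/eqP: x0; case; apply/matrixP=> i j; rewrite mxE.
by move: (h (i, j)) => /= /negbFE /eqP.
Qed.

Lemma eig_diag (F : fieldType) k (d : 'rV[F]_k) a :
  eigenvalue (diag_mx d) a <-> exists i, a = d 0 i.
Proof.
rewrite eigC; split.
  move=> [x [x0 hx]]; have [i [j xij]] := nz_entry x0.
  exists i; move/matrixP: hx => /(_ i j); rewrite mul_diag_mx !mxE => /eqP.
  rewrite -subr_eq0 -mulrBl mulf_eq0 (negbTE xij) orbF subr_eq0 => /eqP ->.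
  done.
move=> [i ->]; exists (delta_mx i 0); split.
  by apply/negP => /eqP/matrixP/(_ i 0); rewrite !mxE !eqxx => /eqP; rewrite oner_eq0.
apply/matrixP=> p q; rewrite mul_diag_mx !mxE.
by case: (eqVneq p i) => [->|]; rewrite ?mulr0 ?mulr1 ?mul0r.
Qed.

Section Main.
Variable R : realType.
Local Notation C := R[i].

Definition dd (a b : C) : 'rV[C]_2 := \row_(i < 2) (if (i : nat) == 0%N then a else b).

Lemma dd_eig {a b z} : eigenvalue (diag_mx (dd a b)) z <-> z = a \/ z = b.
Proof.
rewrite eig_diag; split.
  by move=> [i ->]; rewrite mxE; case: (_ == _); [left|right].
by move=> [->|->]; [exists 0 | exists 1]; rewrite mxE.
Qed.

Lemma sq1 (r : C) : 0 <= r -> r * r = 1 -> r = 1.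
Proof. by move=> r0 h; apply/eqP; rewrite -(pexpr_eq1 (n:=2)) // expr2 h. Qed.

Lemma B0w k (x y : 'cV[C]_k) (w : 'cV[C]_2) :
  row_mx x y *m w = (w 0 0) *: x + (w 1 0) *: y.
Proof.
have e : w = col_mx (@usubmx _ 1 1 1 w) (@dsubmx _ 1 1 1 w) by rewrite vsubmxK.
rewrite {1}e mul_row_col (mx11_scalar (@usubmx _ 1 1 1 w)) (mx11_scalar (@dsubmx _ 1 1 1 w)).
rewrite !mul_mx_scalar !mxE /=.
by congr (_ *: _ + _ *: _); congr (w _ _); apply: val_inj.
Qed.

Lemma indep {k} {x y : 'cV[C]_k} {al be} :
  x != 0 -> y != 0 -> distinct_points x y -> al *: x + be *: y = 0 ->
  al = 0 /\ be = 0.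
Proof.
move=> x0 y0 dxy h.
have be0 : be = 0.
  apply/eqP/negP => /negP bn; apply: dxy; exists (- (al / be)); split.
    rewrite oppr_eq0 mulf_eq0 invr_eq0 (negbTE bn) orbF; apply/negP => /eqP a0.
    by move: h; rewrite a0 scale0r add0r => /eqP; rewrite scaler_eq0 (negbTE bn) (negbTE y0).
  apply: (scalerI bn); rewrite scalerA mulrN mulrCA divff // mulr1.
  by apply/eqP; rewrite eq_sym -subr_eq0 scaleNr -opprD h oppr0.
split=> //; move: h; rewrite be0 scale0r addr0 => /eqP.
by rewrite scaler_eq0 (negbTE x0) orbF => /eqP.
Qed.

Lemma B0inj {k m} {x y : 'cV[C]_k} {N : 'M[C]_(2, m)} :
  x != 0 -> y != 0 -> distinct_points x y -> row_mx x y *m N = 0 -> N = 0.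
Proof.
move=> x0 y0 dxy h; apply/matrixP => i j.
have : row_mx x y *m col j N = 0 by rewrite colE mulmxA h mul0mx.
rewrite B0w => /(indep x0 y0 dxy) [h0 h1].
rewrite mxE; case: i => [[|[|//]]] ?.
  by move: h0; rewrite mxE; congr (N _ _ = _); apply: val_inj.
by move: h1; rewrite mxE; congr (N _ _ = _); apply: val_inj.
Qed.

Lemma gB0 {k} {g : 'M[C]_k} {x y : 'cV[C]_k} {a b} :
  g *m x = a *: x -> g *m y = b *: y ->
  g *m row_mx x y = row_mx x y *m diag_mx (dd a b).
Proof.
move=> hx hy; rewrite mul_mx_row hx hy mul_mx_diag; apply/matrixP => i j.
rewrite !mxE; case: splitP => j' hj; rewrite !mxE hj; case: j' {hj} => [[|//] ?] /=.
  by rewrite mulrC.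
by rewrite mulrC.
Qed.

Lemma restr_sim {k} {g : 'M[C]_k} {x y : 'cV[C]_k} {a b M} :
  x != 0 -> y != 0 -> distinct_points x y ->
  g *m x = a *: x -> g *m y = b *: y -> restriction_on_line g x y M ->
  exists P, P \in unitmx /\ diag_mx (dd a b) *m P = P *m M.
Proof.
move=> x0 y0 dxy hx hy [P [Pu hP]]; exists P; split=> //; move: hP => /= hP.
apply/eqP; rewrite -subr_eq0; apply/eqP; apply: (B0inj x0 y0 dxy).
by rewrite mulmxBr !mulmxA -(gB0 hx hy) -(mulmxA g) hP subrr.
Qed.

Lemma sim_eig {D M P : 'M[C]_2} {z : C} :
  P \in unitmx -> D *m P = P *m M -> eigenvalue M z <-> eigenvalue D z.
Proof.
move=> Pu hP; split => /eigC [w [w0 hw]]; apply/eigC.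
  exists (P *m w); split.
    apply/negP => /eqP h; move/negP: w0; apply.
    by rewrite -(mulKmx Pu w) h mulmx0.
  by rewrite mulmxA hP -mulmxA hw scalemxAr.
have eM : M = invmx P *m D *m P by rewrite -mulmxA hP mulKmx.
exists (invmx P *m w); split.
  apply/negP => /eqP h; move/negP: w0; apply.
  have Pi : invmx P \in unitmx by rewrite unitmx_inv.
  by rewrite -(mulKmx Pi w) h mulmx0.
by rewrite eM -!mulmxA (mulmxA P) mulmxV // mul1mx hw scalemxAr.
Qed.

Lemma sim_det {D M P : 'M[C]_2} :
  P \in unitmx -> D *m P = P *m M -> \det M = \det D.
Proof.
move=> Pu hP; have := congr1 determinant hP; rewrite !det_mulmx => e.
have dP : \det P != 0 by rewrite -unitfE -unitmxE.
by apply: (mulfI dP); rewrite -e mulrC.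
Qed.

Lemma det_dd a b : \det (diag_mx (dd a b)) = a * b.
Proof. by rewrite det_diag !big_ord_recl big_ord0 !mxE /= mulr1. Qed.

Lemma lift_ex {M : 'M[C]_2} : \det M != 0 ->
  exists c, c != 0 /\ is_lift M (c *: M).
Proof.
move=> d0; set c := sqrtC (\det M)^-1.
have c2 : c ^+ 2 * \det M = 1 by rewrite sqrtCK mulVf.
have c0 : c != 0 by apply/negP => /eqP e; move: c2; rewrite e expr0n mul0r => /eqP; rewrite eq_sym oner_eq0.
exists c; split=> //; split; last by exists c.
by rewrite detZ.
Qed.


Lemma restr_ell (M : 'M[C]_2) P a b : a != 0 -> b != 0 ->
  P \in unitmx -> diag_mx (dd a b) *m P = P *m M -> elliptic M -> `|a| = `|b|.
Proof.
move=> a0 b0 Pu hP he.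
have dM : \det M = a * b by rewrite (sim_det Pu hP) det_dd.
have [c [c0 hl]] : exists c, c != 0 /\ is_lift M (c *: M) by apply: lift_ex; rewrite dM mulf_neq0.
have [_ hu] := he _ hl.
have ea : eigenvalue (c *: M) (c * a).
  by apply/(eig_scale c0); rewrite (mulKf c0); apply/(sim_eig Pu hP)/dd_eig; left.
have eb : eigenvalue (c *: M) (c * b).
  by apply/(eig_scale c0); rewrite (mulKf c0); apply/(sim_eig Pu hP)/dd_eig; right.
have := hu _ ea; rewrite -(hu _ eb) !normrM => /mulfI; apply.
by rewrite normr_eq0.
Qed.

Lemma restr_lox (M : 'M[C]_2) P a b : a != 0 -> b != 0 ->
  P \in unitmx -> diag_mx (dd a b) *m P = P *m M -> loxodromic M -> `|a| != `|b|.
Proof.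
move=> a0 b0 Pu hP hl; apply/negP => /eqP eab.
have dM : \det M = a * b by rewrite (sim_det Pu hP) det_dd.
have [c [c0 hc]] : exists c, c != 0 /\ is_lift M (c *: M) by apply: lift_ex; rewrite dM mulf_neq0.
have [z [ez nz]] := hl _ hc.
move/(eig_scale c0)/(sim_eig Pu hP)/dd_eig: ez => ez.
have d1 : `|c * a| * `|c * b| = 1.
  case: hc => + _; rewrite detZ dM => h.
  by rewrite -normrM mulrACA -expr2 h normr1.
have ha : `|c * a| = 1 by apply: sq1 => //; rewrite {2}normrM eab -normrM.
have hb : `|c * b| = 1 by apply: sq1 => //; rewrite {1}normrM -eab -normrM.
have ez' : z = c * (c^-1 * z) by rewrite (mulVKf c0).
move/eqP: nz; apply; rewrite ez'.
by case: ez => ->.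
Qed.

Lemma D_ell a b : `|a| = 1 -> `|b| = 1 -> elliptic (diag_mx (dd a b)).
Proof.
move=> ha hb h [dh [c [c0 eh]]]; split.
  have -> : h = diag_mx (c *: dd a b).
    by rewrite eh; apply/matrixP=> i j; rewrite !mxE; case: (i == j); rewrite ?mulr0 ?mulr1n.
  exact: diagonalizable_diag.
move=> z; rewrite eh => /(eig_scale c0)/dd_eig ez.
have hc : `|c| = 1.
  move: dh; rewrite eh detZ det_dd => /(congr1 Num.norm); rewrite normr1 !normrM ha hb !mulr1.
  by move/sq1; apply.
have ez' : z = c * (c^-1 * z) by rewrite (mulVKf c0).
by rewrite ez' normrM hc mul1r; case: ez => ->.
Qed.

Lemma D_lox a b : a != 0 -> b != 0 -> `|a| != `|b| -> loxodromic (diag_mx (dd a b)).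
Proof.
move=> a0 b0 nab h [dh [c [c0 eh]]].
have d1 : `|c * a| * `|c * b| = 1.
  move: dh; rewrite eh detZ det_dd => h1.
  by rewrite -normrM mulrACA -expr2 h1 normr1.
have ea : eigenvalue h (c * a).
  by rewrite eh; apply/(eig_scale c0); rewrite (mulKf c0); apply/dd_eig; left.
have eb : eigenvalue h (c * b).
  by rewrite eh; apply/(eig_scale c0); rewrite (mulKf c0); apply/dd_eig; right.
case: (eqVneq `|c * a| 1) => ha; last by exists (c * a).
exists (c * b); split=> //; apply/negP => /eqP hb.
move/negP: nab; apply; apply/eqP.
have : `|c * a| = `|c * b| by rewrite ha hb.
rewrite !normrM => /mulfI; apply; by rewrite normr_eq0.
Qed.

Section G.
Variable n : nat.
Variable g : 'M[C]_(n.+1).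
Hypothesis hg : \det g = 1.

Lemma lift_g h : is_lift g h -> exists c, [/\ `|c| = 1, c != 0 & h = c *: g].
Proof.
move=> [dh [c [c0 eh]]]; exists c; split=> //.
move: dh; rewrite eh detZ hg mulr1 => /(congr1 Num.norm); rewrite normr1 normrX => /eqP.
by rewrite pexpr_eq1 // => /eqP.
Qed.

Lemma g_lift : is_lift g g.
Proof. by split=> //; exists 1; rewrite oner_eq0 scale1r. Qed.

Lemma eig_nz a : eigenvalue g a -> a != 0.
Proof.
move=> /eigC [x [x0 hx]]; apply/negP => /eqP a0; move/negP: x0; apply.
have gu : g \in unitmx by rewrite unitmxE hg unitr1.
by rewrite -(mulKmx gu x) hx a0 scale0r mulmx0.
Qed.

Lemma eig_fix a : eigenvalue g a -> exists x, fixed_point g x /\ g *m x = a *: x.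
Proof. by move=> /eigC [x [x0 hx]]; exists x; split=> //; split=> //; exists a. Qed.

Lemma fix_eig x : fixed_point g x -> exists a, eigenvalue g a /\ g *m x = a *: x.
Proof. by move=> [x0 [a hx]]; exists a; split=> //; apply/eigC; exists x. Qed.

Lemma nd_same x y a b : x != 0 -> g *m x = a *: x -> g *m y = b *: y ->
  ~ distinct_points x y -> a = b.
Proof.
move=> x0 hx hy /NNPP [c [c0 ey]].
move: hy; rewrite ey -scalemxAr hx !scalerA => /eqP; rewrite -subr_eq0 -scalerBl.
rewrite scaler_eq0 (negbTE x0) orbF subr_eq0 mulrC => /eqP e; apply: (mulfI c0).
by rewrite mulrC e mulrC.
Qed.

Lemma all_unit : (forall a b, eigenvalue g a -> eigenvalue g b -> `|a| = `|b|) ->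
  forall a, eigenvalue g a -> `|a| = 1.
Proof.
move=> H a ea; have := @det_abs _ _ g `|a| (fun b eb => H _ _ eb ea).
by rewrite hg normr1 => /esym /eqP; rewrite pexpr_eq1 // => /eqP.
Qed.

Lemma pair_eq_of_ell : (forall x y, fixed_point g x -> fixed_point g y ->
    distinct_points x y -> restr_elliptic g x y) ->
  forall a b, eigenvalue g a -> eigenvalue g b -> `|a| = `|b|.
Proof.
move=> H a b ea eb.
have [x [fx hx]] := eig_fix _ ea; have [y [fy hy]] := eig_fix _ eb.
case: (classic (distinct_points x y)) => dxy; last first.
  by rewrite (nd_same _ _ _ _ fx.1 hx hy dxy).
have [M [hr he]] := H _ _ fx fy dxy.
have [P [Pu hP]] := restr_sim fx.1 fy.1 dxy hx hy hr.
exact: (@restr_ell M P a b (eig_nz _ ea) (eig_nz _ eb) Pu hP he).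
Qed.

Lemma unit_lift : (forall a, eigenvalue g a -> `|a| = 1) ->
  forall h, is_lift g h -> forall z, eigenvalue h z -> `|z| = 1.
Proof.
move=> H h hl z; have [c [c1 c0 ->]] := lift_g _ hl.
move/(eig_scale c0)/H => e.
by rewrite -(mulVKf c0 z) normrM c1 e mulr1.
Qed.

Lemma restr_ell_of_unit : (forall a, eigenvalue g a -> `|a| = 1) ->
  forall x y, fixed_point g x -> fixed_point g y ->
    distinct_points x y -> restr_elliptic g x y.
Proof.
move=> H x y fx fy dxy.
have [a [ea hx]] := fix_eig _ fx; have [b [eb hy]] := fix_eig _ fy.
exists (diag_mx (dd a b)); split; last exact: D_ell _ _ (H _ ea) (H _ eb).
exists 1; split; first exact: unitmx1.
by rewrite /= mulmx1 (gB0 hx hy).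
Qed.


Lemma part1 : loxodromic g <->
     exists x y : 'cV[C]_(n.+1),
       [/\ fixed_point g x, fixed_point g y, distinct_points x y
         & restr_loxodromic g x y].
Proof.
split.
  move=> hl; have [a [ea na]] := hl _ g_lift.
  have [b [eb nb]] : exists b, eigenvalue g b /\ `|b| != `|a|.
    apply: NNPP => nex; move/eqP: na; apply.
    have hb : forall b, eigenvalue g b -> `|b| = `|a|.
      move=> b eb; apply/eqP; apply: contraT => nb; by case: nex; exists b.
    have := @det_abs _ _ g `|a| hb.
    by rewrite hg normr1 => /esym /eqP; rewrite pexpr_eq1 // => /eqP.
  have [x [fx hx]] := eig_fix _ ea; have [y [fy hy]] := eig_fix _ eb.
  have dxy : distinct_points x y.
    apply: NNPP => nd; move/eqP: nb; apply.
    by rewrite (nd_same _ _ _ _ fx.1 hx hy nd).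
  exists x, y; split=> //; exists (diag_mx (dd a b)); split.
    by exists 1; split; [exact: unitmx1 | rewrite /= mulmx1 (gB0 hx hy)].
  by apply: D_lox; rewrite ?eig_nz // eq_sym.
move=> [x [y [fx fy dxy [M [hr hl]]]]].
have [a [ea hx]] := fix_eig _ fx; have [b [eb hy]] := fix_eig _ fy.
have [P [Pu hP]] := restr_sim fx.1 fy.1 dxy hx hy hr.
have nab := @restr_lox M P a b (eig_nz _ ea) (eig_nz _ eb) Pu hP hl.
have [w [ew nw]] : exists w, eigenvalue g w /\ `|w| != 1.
  case: (eqVneq `|a| 1) => ha; last by exists a.
  by exists b; split=> //; rewrite -ha eq_sym.
move=> h hh; have [c [c1 c0 ->]] := lift_g _ hh.
exists (c * w); split; first by apply/(eig_scale c0); rewrite (mulKf c0).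
by rewrite normrM c1 mul1r.
Qed.

Lemma part2 : parabolic g <->
     (forall h, is_lift g h -> ~ diagonalizable h) /\
     (forall x y : 'cV[C]_(n.+1),
        fixed_point g x -> fixed_point g y -> distinct_points x y ->
        restr_elliptic g x y).
Proof.
split.
  move=> hp; split; first by move=> h /hp [].
  by apply: restr_ell_of_unit; have [] := hp _ g_lift.
move=> [hd hr] h hh; split; last exact: hd.
exact: (unit_lift (all_unit (pair_eq_of_ell hr))).
Qed.

Lemma part3 : elliptic g <->
     (forall h, is_lift g h -> diagonalizable h) /\
     (forall x y : 'cV[C]_(n.+1),
        fixed_point g x -> fixed_point g y -> distinct_points x y ->
        restr_elliptic g x y).
Proof.
split.
  move=> hp; split; first by move=> h /hp [].
  by apply: restr_ell_of_unit; have [] := hp _ g_lift.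
move=> [hd hr] h hh; split; first exact: hd.
exact: (unit_lift (all_unit (pair_eq_of_ell hr))).
Qed.

End G.
End Main.

Theorem mainTheorem5 (R : realType) (n : nat) (g : 'M[R[i]]_(n.+1))
    (hg : \det g = 1) :
  (loxodromic g <->
     exists x y : 'cV[R[i]]_(n.+1),
       [/\ fixed_point g x, fixed_point g y, distinct_points x y
         & restr_loxodromic g x y])
  /\
  (parabolic g <->
     (forall h, is_lift g h -> ~ diagonalizable h) /\
     (forall x y : 'cV[R[i]]_(n.+1),
        fixed_point g x -> fixed_point g y -> distinct_points x y ->
        restr_elliptic g x y))
  /\
  (elliptic g <->
     (forall h, is_lift g h -> diagonalizable h) /\
     (forall x y : 'cV[R[i]]_(n.+1),
        fixed_point g x -> fixed_point g y -> distinct_points x y ->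
        restr_elliptic g x y)).
Proof.
split; first exact: part1.
split; first exact: part2.
exact: part3.
Qed.
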